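(* Let $n$ be a non-negative integer and let $a,b$ be integers with $\gcd(a,b)=1$, $a+b\neq 0$ and $a+b\neq \pm 1$. For natural numbers $N$ put $B(N,2,a,b)=\sum_{k=0}^{N}\binom{N}{k}^2 a^{N-k}b^k$. Then $$\omega_{a+b}\big(B(2n,2,a,b)\big)=\omega_{a+b}\Big(\binom{2n}{n}\Big),\qquad \omega_{a+b}\big(B(2n+1,2,a,b)\big)=1+\omega_{a+b}\Big((2n+1)\binom{2n}{n}\Big).$$
   Context: For an integer $x$ with $x\neq 0$ and $x\neq\pm1$ and a nonzero integer $y$, $\omega_x(y)$ denotes the largest non-negative integer $e$ such that $x^e$ divides $y$ (when $x$ is a prime $p$ this is the $p$-adic valuation $v_p(y)$). *)

(* Defs.v *)
From mathcomp Require Import all_boot all_order all_algebra.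
Set Implicit Arguments. Unset Strict Implicit. Unset Printing Implicit Defensive.
Import Order.TTheory GRing.Theory Num.Theory.
Local Open Scope ring_scope.

(* omega x y : the largest e such that x^e divides y (for x <> 0, +-1, y <> 0).
   For such x,y, x^e | y forces e < |y|, so the bounded maximum over
   e <= |y| is exactly the largest such e. (Junk value 0 when y = 0.) *)
Definition omega (x y : int) : nat :=
  (\max_(e < `|y|%N.+1 | (x ^+ e %| y)%Z) (e : nat))%N.

Definition B2 (N : nat) (a b : int) : int :=
  \sum_(k < N.+1) ('C(N, k) ^ 2)%:Z * a ^+ (N - k) * b ^+ k.

(* Main.v *)
Require Import Defs.
From mathcomp Require Import all_boot all_order all_algebra zify ring.
Import Order.TTheory GRing.Theory Num.Theory.
Local Open Scope ring_scope.

Lemma omega_bound (x y : int) e : (1 < `|x|)%N -> y != 0 ->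
  (x ^+ e %| y)%Z -> (e < `|y|.+1)%N.
Proof.
move=> hx hy; rewrite dvdzE abszX => hd.
have hy0 : (0 < `|y|)%N by rewrite absz_gt0.
have := dvdn_leq hy0 hd; have := ltn_expl e hx; rewrite ltnS; lia.
Qed.

Lemma omega_spec (x y : int) e : (1 < `|x|)%N -> y != 0 ->
  (x ^+ e %| y)%Z -> ~~ (x ^+ e.+1 %| y)%Z -> omega x y = e.
Proof.
move=> hx hy h1 h2; rewrite /omega; apply/eqP; rewrite eqn_leq; apply/andP; split.
  apply/bigmax_leqP => i Hi; rewrite leqNgt; apply/negP => lt.
  by move/negP: h2; apply; apply: dvdz_trans Hi; apply: dvdz_exp2l.
have He := omega_bound _ _ _ hx hy h1.
exact: (@leq_bigmax_cond _ (fun i : 'I_(`|y|.+1) => (x ^+ i %| y)%Z)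
          (fun i => nat_of_ord i) (Ordinal He)).
Qed.

Lemma omega_prop (x y : int) : (1 < `|x|)%N -> y != 0 ->
  (x ^+ omega x y %| y)%Z /\ ~~ (x ^+ (omega x y).+1 %| y)%Z.
Proof.
move=> hx hy.
have P0 : (x ^+ (@ord0 `|y|) %| y)%Z by rewrite expr0 dvd1z.
split.
  rewrite /omega (bigop.bigmax_eq_arg (@ord0 `|y|) P0).
  by case: arg_maxnP.
apply/negP => hd.
have He := omega_bound _ _ _ hx hy hd.
have := (@leq_bigmax_cond _ (fun i : 'I_(`|y|.+1) => (x ^+ i %| y)%Z)
          (fun i => nat_of_ord i) (Ordinal He) hd).
by rewrite -/(omega x y) /= ltnn.
Qed.
Definition XX (N j : nat) := ('C(N, j) * 'C(N - j, j))%N.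

Lemma bf n m : ('C(n + m, n) * (n`! * m`!) = (n + m)`!)%N.
Proof. by rewrite -{2}(addnK n m) [(m + n)%N]addnC bin_fact // leq_addr. Qed.

Lemma XX_fact j r : (XX (j + j + r) j * (j`! * j`! * r`!) = (j + j + r)`!)%N.
Proof.
rewrite /XX -addnA addKn.
have h1 := bf j r. have h2 := bf j (j + r).
rewrite -h2 -h1; ring.
Qed.

Lemma trinom j m r : ('C(j + j + m + r, m + j) * 'C(m + j, j) * 'C(j + r, j)
   = XX (j + j + m + r) j * 'C(m + r, m))%N.
Proof.
have F0 : (0 < j`! * j`! * m`! * r`!)%N by rewrite !muln_gt0 !fact_gt0.
apply/eqP; rewrite -(eqn_pmul2r F0); apply/eqP.
have e1 := bf (m + j) (j + r). rewrite (_ : (m + j + (j + r) = j + j + m + r)%N) in e1; last lia.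
have e2 := bf j m. rewrite addnC in e2.
have e3 := bf j r.
have e4 := bf m r.
have e5 := XX_fact j (m + r). rewrite addnA in e5.
transitivity ('C(j + j + m + r, m + j) * (('C(m + j, j) * (j`! * m`!)) * ('C(j + r, j) * (j`! * r`!))))%N.
  ring.
rewrite e2 e3 e1 -e5 -e4; ring.
Qed.

Lemma vdm k l : (\sum_(j < (k + l).+1) 'C(k, j) * 'C(l, j) = 'C(k + l, k))%N.
Proof.
have -> : 'C(k + l, k) = 'C(k + l, l) by rewrite -(bin_sub (leq_addl k l)) addnK.
rewrite -binomial.Vandermonde.
rewrite (big_ord_widen (k + l).+1 (fun j => 'C(k, j) * 'C(l, l - j))%N); last by rewrite ltnS leq_addl.
rewrite [RHS]big_mkcond /=; apply: eq_bigr => j _.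
case: ifP => hj; first by rewrite bin_sub.
by rewrite [binomial l j]bin_small ?muln0 //; lia.
Qed.

Lemma inner j M (a b : int) :
  \sum_(k < (j + j + M).+1) ('C(j + j + M, k) * 'C(k, j) * 'C(j + j + M - k, j))%:R
       * a ^+ (j + j + M - k) * b ^+ k
  = (XX (j + j + M) j)%:R * (a * b) ^+ j * (a + b) ^+ M.
Proof.
pose F := fun k : nat => ('C(j + j + M, k) * 'C(k, j) * 'C(j + j + M - k, j))%:R
       * a ^+ (j + j + M - k) * b ^+ k : int.
rewrite [LHS](_ : _ = \sum_(0 <= k < (j + j + M).+1) F k); last by rewrite big_mkord.
rewrite exprDn mulr_sumr (big_cat_nat (leq0n j)); last lia.
rewrite big_nat_cond big1 ?add0r; last first.
  move=> k /andP[/andP[_ hk] _]; rewrite /F [binomial k j]bin_small //.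
  by rewrite muln0 mul0n !mul0r.
rewrite /= add0r; have := big_addn 0 (j + j + M).+1 j xpredT F; rewrite add0n => ->.
have -> : ((j + j + M).+1 - j = (j + M).+1)%N by lia.
rewrite (big_cat_nat (leq0n M.+1)) /=; last lia.
rewrite [X in _ + X]big_nat_cond [X in _ + X]big1 ?addr0; last first.
  move=> m /andP[/andP[hm hm2] _].
  rewrite /F [binomial (_ - _) j]bin_small ?muln0 ?mul0r //; lia.
rewrite big_mkord; apply: eq_bigr => -[m hm] _; rewrite /F /=.
have [r ->] : exists r, M = (m + r)%N by exists (M - m)%N; lia.
rewrite (_ : (j + j + (m + r) - (m + j) = j + r)%N); last lia.
rewrite (_ : (m + r - m = r)%N); last lia.
rewrite addnA trinom natrM -mulr_natr.
rewrite exprMn !exprD; ring.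
Qed.

Lemma XX_big N j : (N < j + j)%N -> XX N j = 0%N.
Proof. by move=> h; rewrite /XX [binomial (N - j) j]bin_small ?muln0 //; lia. Qed.

Lemma B2_expand N a b : B2 N a b =
  \sum_(j < N.+1) (XX N j)%:R * (a * b) ^+ j * (a + b) ^+ (N - j.*2).
Proof.
rewrite /B2.
transitivity (\sum_(k < N.+1) \sum_(j < N.+1)
   ('C(N, k) * 'C(k, j) * 'C(N - k, j))%:R * a ^+ (N - k) * b ^+ k).
  apply: eq_bigr => k _; rewrite -mulr_suml -mulr_suml -natr_sum.
  congr (_ * _ * _).
  have hk : (k <= N)%N by rewrite -ltnS.
  have e := vdm k (N - k); rewrite subnKC // in e.
  rewrite -natz; congr (_%:R).
  under eq_bigr => j _ do rewrite -mulnA.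
  by rewrite -big_distrr /= e.
rewrite exchange_big; apply: eq_bigr => -[j hj] _ /=; clear hj.
case: (leqP (j + j) N) => h.
  have [M eM] : exists M, N = (j + j + M)%N by exists (N - (j + j))%N; lia.
  rewrite eM (_ : (j + j + M - j.*2 = M)%N); last lia.
  exact: inner.
rewrite XX_big // mul0r mul0r big1 // => k _.
case: (ltnP k j) => hk.
  by rewrite [binomial k j]bin_small // muln0 mul0n !mul0r.
by rewrite [binomial (N - k) j]bin_small ?muln0 ?mul0r //; lia.
Qed.

Section NatPart.
Local Open Scope nat_scope.
Lemma pow2_le q l : 2 <= q -> 2 ^ l <= q ^ l.
Proof. by move=> hq; elim: l => // l IH; rewrite !expnS leq_mul. Qed.

Lemma cbin_step i : i.+1 * 'C(i.*2.+2, i.+1) = 2 * (i.*2.+1 * 'C(i.*2, i)).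
Proof.
have h1 := mul_bin_diag (i.*2.+2) i.
have h2 := mul_bin_down (i.*2.+1) i.
rewrite /= in h1 h2.
have e : i.*2.+1 - i = i.+1 by lia.
rewrite e in h2.
rewrite -h1 h2 -doubleS -mul2n; lia.
Qed.

Lemma cbin_le i : 0 < i -> 2 * 'C(i.*2, i) <= 4 ^ i.
Proof.
case: i => // i _; elim: i => [|i IH]; first by [].
have h := cbin_step i.+1.
rewrite expnS.
have : i.+2 * (2 * 'C((i.+2).*2, i.+2)) <= i.+2 * (4 * 4 ^ i.+1).
  rewrite mulnA (mulnC i.+2) -mulnA h.
  have : (i.+1).*2.+1 * 'C((i.+1).*2, i.+1) <= i.+2 * 2 * 'C((i.+1).*2, i.+1).
    by apply: leq_mul => //; lia.
  nia.
by rewrite leq_pmul2l.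
Qed.

Lemma odd_bound i : 0 < i -> i.*2.+1 * 4 ^ i < 2 * 9 ^ i.
Proof.
case: i => // i _; elim: i => [|i IH]; first by [].
rewrite (expnS 4) (expnS 9).
have h4 : 0 < 4 ^ i.+1 by rewrite expn_gt0.
nia.
Qed.

Lemma logn_even q i : prime q -> 0 < i -> logn q 'C(i.*2, i) < i.*2.
Proof.
move=> pq hi.
have hC : 0 < 'C(i.*2, i) by rewrite bin_gt0; lia.
have h1 := dvdn_leq hC (pfactor_dvdnn q 'C(i.*2, i)).
have h2 := pow2_le _ (logn q (binomial i.*2 i)) (prime_gt1 pq).
have h3 := cbin_le _ hi.
have e : 4 ^ i = 2 ^ i.*2 by rewrite -mul2n expnM.
rewrite -(ltn_exp2l _ _ (isT : 1 < 2)) -e.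
rewrite -[2 ^ logn _ _]mul1n in h2; nia.
Qed.

Lemma logn_odd q i : prime q -> 0 < i -> logn q (i.*2.+1 * 'C(i.*2, i)) < i.*2.
Proof.
move=> pq hi.
have hC : 0 < 'C(i.*2, i) by rewrite bin_gt0; lia.
have [->|q2] := eqVneq q 2.
  by rewrite logn_Gauss ?coprime2n /= ?odd_double // logn_even.
have q3 : 3 <= q by have := prime_gt1 pq; move: q2; lia.
set D := _ * _.
have hD : 0 < D by rewrite /D muln_gt0 hC.
have h1 := dvdn_leq hD (pfactor_dvdnn q D).
have h2 : 3 ^ logn q D <= q ^ logn q D.
  by elim: (logn q D) => // l IH; rewrite !expnS leq_mul.
have h3 := cbin_le _ hi.
have h4 := odd_bound _ hi.
have e : 9 ^ i = 3 ^ i.*2 by rewrite -mul2n expnM.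
rewrite -(ltn_exp2l _ _ (isT : 1 < 3)) -e.
have : 2 * D <= i.*2.+1 * 4 ^ i by rewrite /D mulnCA leq_mul2l h3 orbT.
nia.
Qed.
Lemma rel_even j i : XX (j + i).*2 j * 'C(i.*2, i) = 'C((j + i).*2, j + i) * 'C(j + i, i) ^ 2.
Proof.
have F0 : 0 < j`! * j`! * i`! * i`! by rewrite !muln_gt0 !fact_gt0.
apply/eqP; rewrite -(eqn_pmul2r F0); apply/eqP.
have e1 := XX_fact j i.*2. rewrite (_ : j + j + i.*2 = (j + i).*2) in e1; last lia.
have e2 := bf i i. rewrite addnn in e2.
have e3 := bf (j + i) (j + i). rewrite addnn in e3.
have e4 := bf i j. rewrite addnC in e4.
transitivity (XX (j + i).*2 j * (j`! * j`! * ('C(i.*2, i) * (i`! * i`!)))); first ring.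
rewrite e2 e1 -e3; set u := (j + i)`!; have -> : u = _ := esym e4; ring.
Qed.

Lemma rel_odd j i : XX (j + i).*2.+1 j * (i.*2.+1 * 'C(i.*2, i))
   = ((j + i).*2.+1 * 'C((j + i).*2, j + i)) * 'C(j + i, i) ^ 2.
Proof.
have F0 : 0 < j`! * j`! * i`! * i`! by rewrite !muln_gt0 !fact_gt0.
apply/eqP; rewrite -(eqn_pmul2r F0); apply/eqP.
have e1 := XX_fact j i.*2.+1. rewrite (_ : j + j + i.*2.+1 = (j + i).*2.+1) in e1; last lia.
have e2 := bf i i. rewrite addnn in e2.
have e3 := bf (j + i) (j + i). rewrite addnn in e3.
have e4 := bf i j. rewrite addnC in e4.
transitivity (XX (j + i).*2.+1 j * (j`! * j`! * (i.*2.+1 * ('C(i.*2, i) * (i`! * i`!))))); first ring.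
rewrite e2 -factS e1 factS -e3; set u := (j + i)`!; have -> : u = _ := esym e4; ring.
Qed.

Lemma XX_top_even n : XX n.*2 n = 'C(n.*2, n).
Proof. by rewrite /XX -addnn addKn binn muln1. Qed.

Lemma XX_top_odd n : XX n.*2.+1 n = n.*2.+1 * 'C(n.*2, n).
Proof.
rewrite /XX (_ : n.*2.+1 - n = n.+1); last lia.
rewrite binSn mulnC.
have := mul_bin_down n.*2.+1 n; rewrite /= => ->.
by rewrite (_ : n.*2.+1 - n = n.+1) //; lia.
Qed.

Lemma key S X D c w i : 0 < i -> 1 < S -> (forall q, prime q -> logn q D < i.*2) ->
  0 < D -> c %| X * D -> S ^ w %| c -> S ^ w.+1 %| X * S ^ i.*2.
Proof.
move=> hi hS hlog hD hc hw.
have [->|hX] := posnP X; first by rewrite mul0n dvdn0.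
have hXD : 0 < X * D by rewrite muln_gt0 hX.
have hw' : S ^ w %| X * D := dvdn_trans hw hc.
have hS0 : 0 < S by lia.
apply/dvdn_partP; first by rewrite expn_gt0 hS0.
move=> q; rewrite mem_primes => /andP[pq /andP[_ qS]].
have qS' : q %| S.
  by move: qS; rewrite Euclid_dvdX // => /andP[].
rewrite p_part pfactor_dvdn // ?muln_gt0 ?hX ?expn_gt0 ?hS0 //.
rewrite lognM ?expn_gt0 ?hS0 // !lognX.
have := dvdn_leq_log q hXD hw'; rewrite lognX lognM //.
have hf : 0 < logn q S by rewrite logn_gt0 mem_primes pq hS0.
have := hlog q pq.
nia.
Qed.
End NatPart.

Lemma core (s p : int) (n M : nat) (F : nat -> nat) :
  (1 < `|s|)%N -> coprimez s p -> (n < M)%N -> (0 < F n)%N ->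
  (forall j, (n < j)%N -> F j = 0%N) ->
  (forall j, (j < n)%N ->
     (`|s| ^ (omega s (F n)%:Z).+1 %| F j * `|s| ^ ((n - j).*2))%N) ->
  (\sum_(j < M) (F j)%:R * p ^+ j * s ^+ (n.*2 - j.*2)) != 0 /\
  omega s (\sum_(j < M) (F j)%:R * p ^+ j * s ^+ (n.*2 - j.*2)) = omega s (F n)%:Z.
Proof.
move=> hs cop hnM hF0 hFbig hdiv.
set B := \sum_(j < M) _.
set w := omega s (F n)%:Z.
have Fnz : (F n)%:Z != 0 by rewrite eqz_nat -lt0n.
have [h1 h2] := omega_prop s (F n)%:Z hs Fnz.
rewrite -/w in h1 h2.
set T := (F n)%:R * p ^+ n.
have hR : (s ^+ w.+1 %| B - T)%Z.
  rewrite /B (bigD1 (Ordinal hnM)) //= subnn expr0 mulr1 -/T addrC addrK.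
  apply: rpred_sum => -[j hj] /= hjn.
  case: (ltngtP j n) => hjn'.
  - rewrite mulrAC; apply: dvdz_mulr.
    rewrite dvdzE abszM -doubleB !abszX natz absz_nat; exact: hdiv.
  - by rewrite hFbig // mul0r mul0r dvdz0.
  - by move: hjn; rewrite -(inj_eq val_inj) /= hjn' eqxx.
have hT : (s ^+ w %| T)%Z by rewrite /T natz; apply: dvdz_mulr.
have hB1 : (s ^+ w %| B)%Z.
  rewrite -(subrK T B); apply: rpredD => //.
  exact: dvdz_trans (dvdz_exp2l s (leqnSn w)) hR.
have hB2 : ~~ (s ^+ w.+1 %| B)%Z.
  apply/negP => hd.
  have : (s ^+ w.+1 %| T)%Z.
    rewrite (_ : T = B - (B - T)); last by rewrite opprB addrC subrK.
    exact: rpredB.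
  rewrite /T Gauss_dvdzl; last by apply: coprimezXr; apply: coprimezXl.
  by rewrite natz; apply/negP.
have Bnz : B != 0 by apply/eqP => B0; rewrite B0 dvdz0 in hB2.
by split => //; apply: omega_spec.
Qed.

Lemma omega_succ (s B : int) : (1 < `|s|)%N -> B != 0 ->
  omega s (s * B) = (omega s B).+1.
Proof.
move=> hs hB.
have snz : s != 0 by rewrite -absz_eq0; lia.
have [h1 h2] := omega_prop s B hs hB.
apply: omega_spec => //; first by rewrite mulf_neq0.
  by rewrite exprS dvdz_mul2l.
by rewrite exprS dvdz_mul2l.
Qed.

Theorem theorem1 (n : nat) (a b : int) :
  gcdz a b = 1%N -> a + b != 0 -> a + b != 1 -> a + b != -1 ->
  [/\ B2 n.*2 a b != 0,
      omega (a + b) (B2 n.*2 a b) = omega (a + b) ('C(n.*2, n))%:Z,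
      B2 n.*2.+1 a b != 0 &
      omega (a + b) (B2 n.*2.+1 a b)
        = (1 + omega (a + b) ((n.*2.+1 * 'C(n.*2, n))%N)%:Z)%N].
Proof.
move=> g s0 s1 sm1.
have hs : (1 < `|(a + b)%R|)%N.
  move: s0 s1 sm1; case: (a + b)%R => [[|[|k]]|k] //= _ _.
  by case: k.
have cop : coprimez (a + b) (a * b).
  rewrite coprimezMr; apply/andP; split; rewrite /coprimez.
    by rewrite gcdzC gcdzDl g.
  by rewrite gcdzC gcdzDr gcdzC g.
have p1 : (n < n.*2.+1)%N by lia.
have p2 : (0 < XX n.*2 n)%N by rewrite XX_top_even bin_gt0 -addnn leq_addr.
have p3 : forall j, (n < j)%N -> XX n.*2 j = 0%N by move=> j hj; apply: XX_big; lia.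
have p4 : forall j, (j < n)%N ->
   (`|(a + b)%R| ^ (omega (a + b) (XX n.*2 n)%:Z).+1 %| XX n.*2 j * `|(a + b)%R| ^ ((n - j).*2))%N.
  move=> j hj; rewrite XX_top_even.
  have [i ei] : exists i, n = (j + i)%N by exists (n - j)%N; lia.
  rewrite ei addKn.
  have hi : (0 < i)%N by lia.
  have [h1 _] := omega_prop (a + b) ('C((j + i).*2, j + i))%:Z hs
    (ltac:(by rewrite eqz_nat -lt0n bin_gt0 -addnn leq_addr)).
  move: h1; rewrite dvdzE abszX absz_nat => h1.
  apply: (key _ _ ('C(i.*2, i)) _ _ _ hi hs) => //.
  - by move=> q pq; exact: logn_even.
  - by rewrite bin_gt0 -addnn leq_addr.
  - by rewrite rel_even dvdn_mulr.
have [E1 E2] := core _ _ _ _ _ hs cop p1 p2 p3 p4.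
have Eodd : B2 n.*2.+1 a b = (a + b) *
   \sum_(j < n.*2.+2) (XX n.*2.+1 j)%:R * (a * b) ^+ j * (a + b) ^+ (n.*2 - j.*2).
  rewrite B2_expand mulr_sumr; apply: eq_bigr => -[j hj] _ /=.
  case: (leqP j n) => hjn.
    rewrite (_ : (n.*2.+1 - j.*2 = (n.*2 - j.*2).+1)%N); last lia.
    by rewrite exprS; ring.
  by rewrite XX_big ?mul0r ?mulr0 //; lia.
have q1 : (n < n.*2.+2)%N by lia.
have q2 : (0 < XX n.*2.+1 n)%N by rewrite XX_top_odd muln_gt0 bin_gt0 -addnn leq_addr.
have q3 : forall j, (n < j)%N -> XX n.*2.+1 j = 0%N by move=> j hj; apply: XX_big; lia.
have q4 : forall j, (j < n)%N ->
   (`|(a + b)%R| ^ (omega (a + b) (XX n.*2.+1 n)%:Z).+1 %| XX n.*2.+1 j * `|(a + b)%R| ^ ((n - j).*2))%N.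
  move=> j hj; rewrite XX_top_odd.
  have [i ei] : exists i, n = (j + i)%N by exists (n - j)%N; lia.
  rewrite ei addKn.
  have hi : (0 < i)%N by lia.
  have [h1 _] := omega_prop (a + b) (((j + i).*2.+1 * 'C((j + i).*2, j + i))%N)%:Z hs
    (ltac:(by rewrite eqz_nat -lt0n muln_gt0 bin_gt0 -addnn leq_addr)).
  move: h1; rewrite dvdzE abszX absz_nat => h1.
  apply: (key _ _ (i.*2.+1 * 'C(i.*2, i)) _ _ _ hi hs) => //.
  - by move=> q pq; exact: logn_odd.
  - by rewrite muln_gt0 bin_gt0 -addnn leq_addr.
  - by rewrite rel_odd dvdn_mulr.
have [O1 O2] := core _ _ _ _ _ hs cop q1 q2 q3 q4.
rewrite XX_top_even in E2; rewrite XX_top_odd in O2.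
rewrite B2_expand Eodd omega_succ // O2 add1n.
split => //.
by rewrite mulf_neq0.
Qed.
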